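(* Let $m>0$, $w>v>0$ and $s,u\geq 0$. Let $\mathfrak{n}$ be the five-dimensional real Lie algebra with basis $\{E_1,\dots,E_5\}$ whose only non-vanishing brackets (up to antisymmetry) are $$[E_1,E_2]=mE_3+sE_4+uE_5,\qquad [E_1,E_3]=vE_4,\qquad [E_2,E_3]=wE_5.$$ Equip the corresponding simply connected nilpotent Lie group with the left-invariant Riemannian metric for which $\{E_1,\dots,E_5\}$ is orthonormal. Then this metric is not an algebraic Ricci soliton.
   Context: Let $G$ be a Lie group with Lie algebra $\mathfrak{g}$ and let $g$ be a left-invariant Riemannian metric on $G$. Let $\mathrm{Ric}$ denote the $(1,1)$ Ricci tensor of $g$, viewed as a linear endomorphism of $\mathfrak{g}$. The metric $g$ is an algebraic Ricci soliton if there are a real number $c$ and a derivation $D$ of $\mathfrak{g}$ such that $\mathrm{Ric}=c\,\mathrm{Id}+D$. *)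

(* Defs.v *)
(* A finite-dimensional real Lie algebra with an inner product
   is modelled on row vectors 'rV[R]_n, the fixed basis {E_i} being the standard
   basis (delta_mx 0 i), which is orthonormal for the standard dot product.
   R ranges over all real fields (the statement is purely algebraic). *)
From HB Require Import structures.
From mathcomp Require Import all_boot all_order all_algebra.
Set Implicit Arguments. Unset Strict Implicit. Unset Printing Implicit Defensive.
Import Order.TTheory GRing.Theory Num.Theory.
Local Open Scope ring_scope.

Section LeftInvariantGeometry.
Variables (R : realFieldType) (n : nat).
Variable br : 'rV[R]_n -> 'rV[R]_n -> 'rV[R]_n.

Definition dotv (x y : 'rV[R]_n) : R := (x *m y^T) 0 0.
Definition bvec (i : 'I_n) : 'rV[R]_n := delta_mx 0 i.

(* Levi-Civita connection of the left-invariant metric, by the Koszul formula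
   2 g(nabla_X Y, Z) = g([X,Y],Z) - g([Y,Z],X) + g([Z,X],Y). *)
Definition lc_nabla (x y : 'rV[R]_n) : 'rV[R]_n :=
  \sum_(k < n) ((dotv (br x y) (bvec k) - dotv (br y (bvec k)) x
                 + dotv (br (bvec k) x) y) / 2) *: bvec k.

Definition curv (x y z : 'rV[R]_n) : 'rV[R]_n :=
  lc_nabla x (lc_nabla y z) - lc_nabla y (lc_nabla x z) - lc_nabla (br x y) z.

Definition ric (y z : 'rV[R]_n) : R :=
  \sum_(i < n) dotv (curv (bvec i) y z) (bvec i).

(* (1,1) Ricci tensor as a matrix acting on row vectors (x |-> x *m RicM),
   so that g(Ric E_i, E_j) = ric(E_i, E_j). *)
Definition RicM : 'M[R]_n := \matrix_(i, j) ric (bvec i) (bvec j).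

Definition is_derivation (D : 'M[R]_n) : Prop :=
  forall x y, br x y *m D = br (x *m D) y + br x (y *m D).

Definition algebraic_ricci_soliton : Prop :=
  exists (c : R) (D : 'M[R]_n), is_derivation D /\ RicM = c%:M + D.

End LeftInvariantGeometry.

(* The five-dimensional nilpotent Lie algebra of the statement, basis
   E_1..E_5 = bvec 0 .. bvec 4:
   [E1,E2] = m E3 + s E4 + u E5, [E1,E3] = v E4, [E2,E3] = w E5. *)
Definition i5 (k : nat) : 'I_5 := inord k.

Definition nbr {R : realFieldType} (m s u v w : R) (x y : 'rV[R]_5) : 'rV[R]_5 :=
  let p i j := x 0 (i5 i) * y 0 (i5 j) - x 0 (i5 j) * y 0 (i5 i) in
  p 0%N 1%N *: (m *: bvec R (i5 2) + s *: bvec R (i5 3) + u *: bvec R (i5 4))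
  + p 0%N 2%N *: (v *: bvec R (i5 3))
  + p 1%N 2%N *: (w *: bvec R (i5 4)).

(* Main.v *)
Require Import Defs.
From HB Require Import structures.
From mathcomp Require Import all_boot all_order all_algebra.
From mathcomp Require Import ring lra.
Import Order.TTheory GRing.Theory Num.Theory.
Local Open Scope ring_scope.

Lemma sum5 (R : realFieldType) (F : 'I_5 -> R) :
  \sum_(k < 5) F k = F (i5 0) + F (i5 1) + F (i5 2) + F (i5 3) + F (i5 4).
Proof.
rewrite !big_ord_recr big_ord0 /= add0r.
congr (_ + _ + _ + _ + _); congr F; apply: val_inj; by rewrite /= ?inordK.
Qed.

Lemma i5eq a b : (a < 5)%N -> (b < 5)%N -> (i5 a == i5 b) = (a == b).
Proof. by move=> ha hb; rewrite /i5 -val_eqE /= !inordK. Qed.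

Section S.
Variables (R : realFieldType) (m s u v w : R).
Notation br := (nbr m s u v w).
Notation E a := (bvec R (i5 a)).

Lemma bvecE a b : (a < 5)%N -> (b < 5)%N -> E a 0 (i5 b) = (a == b)%:R.
Proof. by move=> ha hb; rewrite /bvec mxE eqxx /= i5eq // eq_sym. Qed.

Ltac nb := rewrite /nbr !mxE ?i5eq //=; ring.
Lemma nb0 x y : br x y 0 (i5 0) = 0. Proof. nb. Qed.
Lemma nb1 x y : br x y 0 (i5 1) = 0. Proof. nb. Qed.
Lemma nb2 x y : br x y 0 (i5 2) =
  m * (x 0 (i5 0) * y 0 (i5 1) - x 0 (i5 1) * y 0 (i5 0)). Proof. nb. Qed.
Lemma nb3 x y : br x y 0 (i5 3) =
  s * (x 0 (i5 0) * y 0 (i5 1) - x 0 (i5 1) * y 0 (i5 0))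
  + v * (x 0 (i5 0) * y 0 (i5 2) - x 0 (i5 2) * y 0 (i5 0)). Proof. nb. Qed.
Lemma nb4 x y : br x y 0 (i5 4) =
  u * (x 0 (i5 0) * y 0 (i5 1) - x 0 (i5 1) * y 0 (i5 0))
  + w * (x 0 (i5 1) * y 0 (i5 2) - x 0 (i5 2) * y 0 (i5 1)). Proof. nb. Qed.

Lemma dotvE (x y : 'rV[R]_5) : dotv x y =
  x 0 (i5 0) * y 0 (i5 0) + x 0 (i5 1) * y 0 (i5 1) + x 0 (i5 2) * y 0 (i5 2)
  + x 0 (i5 3) * y 0 (i5 3) + x 0 (i5 4) * y 0 (i5 4).
Proof.
rewrite /dotv mxE sum5 !mxE //.
Qed.

Lemma scbE a (k j : 'I_5) : (a *: bvec R k) 0 j = a * (j == k)%:R.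
Proof. by rewrite /bvec !mxE eqxx. Qed.

Lemma dotbE (z : 'rV[R]_5) k : dotv z (bvec R k) = z 0 k.
Proof.
rewrite /dotv mxE (bigD1 k) //= big1 ?addr0.
  by rewrite !mxE !eqxx /= mulr1.
by move=> j hj; rewrite !mxE (negbTE hj) andbF mulr0.
Qed.

Lemma nabE x y k : lc_nabla br x y 0 k =
  (br x y 0 k - dotv (br y (bvec R k)) x + dotv (br (bvec R k) x) y) / 2.
Proof.
rewrite /lc_nabla summxE (bigD1 k) //= big1 ?addr0.
  by rewrite scbE eqxx mulr1 dotbE.
by move=> j hj; rewrite scbE eq_sym (negbTE hj) mulr0.
Qed.
Lemma sub3E (A B C : 'rV[R]_5) k : (A - B - C) 0 k = A 0 k - B 0 k - C 0 k.
Proof. by rewrite !mxE. Qed.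

Lemma ricE a b : (a < 5)%N -> (b < 5)%N -> ric br (E a) (E b) =
  \sum_(i < 5) curv br (bvec R i) (E a) (E b) 0 i.
Proof. by move=> ha hb; rewrite /ric; apply: eq_bigr => i _; rewrite dotbE. Qed.

Record V5 := mkV { a0 : R; a1 : R; a2 : R; a3 : R; a4 : R }.
Definition cv (x : 'rV[R]_5) := mkV (x 0 (i5 0)) (x 0 (i5 1)) (x 0 (i5 2)) (x 0 (i5 3)) (x 0 (i5 4)).
Definition BRV X Y :=
  let p01 := a0 X * a1 Y - a1 X * a0 Y in
  let p02 := a0 X * a2 Y - a2 X * a0 Y in
  let p12 := a1 X * a2 Y - a2 X * a1 Y in
  mkV 0 0 (m * p01) (s * p01 + v * p02) (u * p01 + w * p12).
Definition DOT X Y := a0 X * a0 Y + a1 X * a1 Y + a2 X * a2 Y + a3 X * a3 Y + a4 X * a4 Y.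
Definition EV (k : nat) := match k with 0 => mkV 1 0 0 0 0 | 1 => mkV 0 1 0 0 0 | 2 => mkV 0 0 1 0 0 | 3 => mkV 0 0 0 1 0 | _ => mkV 0 0 0 0 1 end.
Definition prj (k : nat) X := match k with 0 => a0 X | 1 => a1 X | 2 => a2 X | 3 => a3 X | _ => a4 X end.
Definition NABV X Y :=
  let x0 := a0 X in let x1 := a1 X in let x2 := a2 X in let x3 := a3 X in let x4 := a4 X in
  let y0 := a0 Y in let y1 := a1 Y in let y2 := a2 Y in let y3 := a3 Y in let y4 := a4 Y in
  mkV ((m*(x1*y2 + x2*y1) + s*(x1*y3 + x3*y1) + u*(x1*y4 + x4*y1) + v*(x2*y3 + x3*y2))/2)
      ((- m*(x0*y2 + x2*y0) - s*(x0*y3 + x3*y0) - u*(x0*y4 + x4*y0) + w*(x2*y4 + x4*y2))/2)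
      ((m*(x0*y1 - x1*y0) - v*(x0*y3 + x3*y0) - w*(x1*y4 + x4*y1))/2)
      ((s*(x0*y1 - x1*y0) + v*(x0*y2 - x2*y0))/2)
      ((u*(x0*y1 - x1*y0) + w*(x1*y2 - x2*y1))/2).
Definition subV X Y := mkV (a0 X - a0 Y) (a1 X - a1 Y) (a2 X - a2 Y) (a3 X - a3 Y) (a4 X - a4 Y).
Definition CURV X Y Z := subV (subV (NABV X (NABV Y Z)) (NABV Y (NABV X Z))) (NABV (BRV X Y) Z).

Lemma cv_br x y : cv (br x y) = BRV (cv x) (cv y).
Proof. by rewrite /cv nb0 nb1 nb2 nb3 nb4. Qed.

Lemma cv_E k : (k < 5)%N -> cv (E k) = EV k.
Proof. by move=> hk; rewrite /cv !bvecE //; case: k hk => [|[|[|[|[|]]]]]. Qed.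

Lemma dotvC x y : dotv x y = DOT (cv x) (cv y).
Proof. by rewrite dotvE. Qed.

Lemma cv_nab x y : cv (lc_nabla br x y) = NABV (cv x) (cv y).
Proof.
rewrite /cv !nabE !dotvC !cv_br !cv_E //.
rewrite nb0 nb1 nb2 nb3 nb4.
cbv beta iota zeta delta [BRV DOT EV NABV].
by cbn [a0 a1 a2 a3 a4 cv]; congr mkV; field.
Qed.

Lemma cv_sub3 (A B C : 'rV[R]_5) : cv (A - B - C) = subV (subV (cv A) (cv B)) (cv C).
Proof. by rewrite /cv !mxE. Qed.

Lemma cv_curv x y z : cv (curv br x y z) = CURV (cv x) (cv y) (cv z).
Proof.
rewrite /curv cv_sub3.
by rewrite !cv_nab cv_br.
Qed.
Lemma cvc0 x y z : a0 (cv (curv br x y z)) = a0 (CURV (cv x) (cv y) (cv z)).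
Proof. by rewrite cv_curv. Qed.
Lemma cvc1 x y z : a1 (cv (curv br x y z)) = a1 (CURV (cv x) (cv y) (cv z)).
Proof. by rewrite cv_curv. Qed.
Lemma cvc2 x y z : a2 (cv (curv br x y z)) = a2 (CURV (cv x) (cv y) (cv z)).
Proof. by rewrite cv_curv. Qed.
Lemma cvc3 x y z : a3 (cv (curv br x y z)) = a3 (CURV (cv x) (cv y) (cv z)).
Proof. by rewrite cv_curv. Qed.
Lemma cvc4 x y z : a4 (cv (curv br x y z)) = a4 (CURV (cv x) (cv y) (cv z)).
Proof. by rewrite cv_curv. Qed.

Lemma ricV a b : (a < 5)%N -> (b < 5)%N -> ric br (E a) (E b) =
  a0 (CURV (EV 0) (EV a) (EV b)) + a1 (CURV (EV 1) (EV a) (EV b))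
  + a2 (CURV (EV 2) (EV a) (EV b)) + a3 (CURV (EV 3) (EV a) (EV b))
  + a4 (CURV (EV 4) (EV a) (EV b)).
Proof.
move=> ha hb; rewrite ricE // sum5.
have ea := @cv_E a ha; have eb := @cv_E b hb.
have e0 := @cv_E 0 isT; have e1 := @cv_E 1 isT; have e2 := @cv_E 2 isT;
have e3 := @cv_E 3 isT; have e4 := @cv_E 4 isT.
congr (_ + _ + _ + _ + _).
- transitivity (a0 (CURV (cv (E 0)) (cv (E a)) (cv (E b)))); first exact: cvc0.
  by rewrite e0 ea eb.
- transitivity (a1 (CURV (cv (E 1)) (cv (E a)) (cv (E b)))); first exact: cvc1.
  by rewrite e1 ea eb.
- transitivity (a2 (CURV (cv (E 2)) (cv (E a)) (cv (E b)))); first exact: cvc2.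
  by rewrite e2 ea eb.
- transitivity (a3 (CURV (cv (E 3)) (cv (E a)) (cv (E b)))); first exact: cvc3.
  by rewrite e3 ea eb.
- transitivity (a4 (CURV (cv (E 4)) (cv (E a)) (cv (E b)))); first exact: cvc4.
  by rewrite e4 ea eb.
Qed.

Ltac rv := rewrite ricV //; cbv beta iota zeta delta [CURV NABV BRV EV subV]; cbn [a0 a1 a2 a3 a4]; field; try done.

Lemma r00 : ric br (E 0) (E 0) = -(m^+2+s^+2+u^+2+v^+2)/2.
Proof. rv. Qed.
Lemma r01 : ric br (E 0) (E 1) = 0.
Proof. rv. Qed.
Lemma r10 : ric br (E 1) (E 0) = 0.
Proof. rv. Qed.
Lemma r21 : ric br (E 2) (E 1) = -(s*v)/2.
Proof. rv. Qed.
Lemma r20 : ric br (E 2) (E 0) = u*w/2.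
Proof. rv. Qed.
Lemma r22 : ric br (E 2) (E 2) = (m^+2-v^+2-w^+2)/2.
Proof. rv. Qed.
Lemma r32 : ric br (E 3) (E 2) = m*s/2.
Proof. rv. Qed.
Lemma r33 : ric br (E 3) (E 3) = (s^+2+v^+2)/2.
Proof. rv. Qed.
Lemma r34 : ric br (E 3) (E 4) = s*u/2.
Proof. rv. Qed.
Lemma r11 : ric br (E 1) (E 1) = -(m^+2+s^+2+u^+2+w^+2)/2.
Proof. rv. Qed.
Lemma r42 : ric br (E 4) (E 2) = m*u/2.
Proof. rv. Qed.
Lemma r43 : ric br (E 4) (E 3) = s*u/2.
Proof. rv. Qed.
Lemma r44 : ric br (E 4) (E 4) = (u^+2+w^+2)/2.
Proof. rv. Qed.

Lemma r02 : ric br (E 0) (E 2) = u*w/2.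
Proof. rv. Qed.
Lemma r12 : ric br (E 1) (E 2) = -(s*v)/2.
Proof. rv. Qed.
Lemma r23 : ric br (E 2) (E 3) = m*s/2.
Proof. rv. Qed.
Lemma r24 : ric br (E 2) (E 4) = m*u/2.
Proof. rv. Qed.
Lemma mulE (A : 'rV[R]_5) (M : 'M[R]_5) k : (A *m M) 0 k =
  A 0 (i5 0) * M (i5 0) k + A 0 (i5 1) * M (i5 1) k + A 0 (i5 2) * M (i5 2) k
  + A 0 (i5 3) * M (i5 3) k + A 0 (i5 4) * M (i5 4) k.
Proof. by rewrite mxE sum5. Qed.
End S.

Theorem mainTheorem9 (R : realFieldType) (m s u v w : R) :
  0 < m -> 0 < v -> v < w -> 0 <= s -> 0 <= u ->
  ~ algebraic_ricci_soliton (nbr m s u v w).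
Proof.
move=> hm hv hvw hs hu [c [D [Hder Hric]]].
pose br := nbr m s u v w.
have DE i j : (i < 5)%N -> (j < 5)%N ->
    D (i5 i) (i5 j) = ric br (bvec R (i5 i)) (bvec R (i5 j)) - c * (i == j)%:R.
  move=> hi hj; have -> : D = RicM br - c%:M by rewrite Hric addrC addKr.
  by rewrite !mxE i5eq // mulr_natr.
have coord k (x y : 'rV[R]_5) : (br x y *m D) 0 (i5 k) =
    br (x *m D) y 0 (i5 k) + br x (y *m D) 0 (i5 k).
  by rewrite Hder mxE.
pose rr (i j : nat) := ric br (bvec R (i5 i)) (bvec R (i5 j)).
have DE2 i j : (i < 5)%N -> (j < 5)%N -> D (i5 i) (i5 j) = rr i j - c * (i == j)%:R.
  exact: DE.
have q00 := r00 R m s u v w; rewrite -/(rr 0%N 0%N) in q00.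
have q01 := r01 R m s u v w; rewrite -/(rr 0%N 1%N) in q01.
have q10 := r10 R m s u v w; rewrite -/(rr 1%N 0%N) in q10.
have q11 := r11 R m s u v w; rewrite -/(rr 1%N 1%N) in q11.
have q20 := r20 R m s u v w; rewrite -/(rr 2%N 0%N) in q20.
have q21 := r21 R m s u v w; rewrite -/(rr 2%N 1%N) in q21.
have q22 := r22 R m s u v w; rewrite -/(rr 2%N 2%N) in q22.
have q32 := r32 R m s u v w; rewrite -/(rr 3%N 2%N) in q32.
have q33 := r33 R m s u v w; rewrite -/(rr 3%N 3%N) in q33.
have q34 := r34 R m s u v w; rewrite -/(rr 3%N 4%N) in q34.
have q42 := r42 R m s u v w; rewrite -/(rr 4%N 2%N) in q42.
have q43 := r43 R m s u v w; rewrite -/(rr 4%N 3%N) in q43.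
have q44 := r44 R m s u v w; rewrite -/(rr 4%N 4%N) in q44.
have q02 := r02 R m s u v w; rewrite -/(rr 0%N 2%N) in q02.
have q12 := r12 R m s u v w; rewrite -/(rr 1%N 2%N) in q12.
have q23 := r23 R m s u v w; rewrite -/(rr 2%N 3%N) in q23.
have q24 := r24 R m s u v w; rewrite -/(rr 2%N 4%N) in q24.
clearbody rr. clear DE.
Arguments ric : simpl never.
Opaque ric.
have e2 := coord 2%N (bvec R (i5 0)) (bvec R (i5 2)).
have e3 := coord 3%N (bvec R (i5 0)) (bvec R (i5 2)).
have f2 := coord 2%N (bvec R (i5 1)) (bvec R (i5 2)).
have f4 := coord 4%N (bvec R (i5 1)) (bvec R (i5 2)).
rewrite /br in e2 e3 f2 f4.
rewrite ?nb0 ?nb1 ?nb2 ?nb3 ?nb4 in e2 e3 f2 f4.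
rewrite !mulE in e2 e3 f2 f4.
rewrite ?nb0 ?nb1 ?nb2 ?nb3 ?nb4 in e2 e3 f2 f4.
rewrite !bvecE // in e2 e3 f2 f4.
rewrite !DE2 // in e2 e3 f2 f4.
simpl in e2, e3, f2, f4.
rewrite ?q00 ?q01 ?q10 ?q11 ?q20 ?q21 ?q22 ?q32 ?q33 ?q34 ?q42 ?q43 ?q44 ?q02 ?q12 ?q23 ?q24 in e2 e3 f2 f4.
clear DE2 coord Hder Hric.
have tr (a b a' b' : R) : a = b -> a = a' -> b = b' -> a' = b'.
  by move=> -> -> ->.
have e2' : v*(m*s/2) = m*(-(s*v)/2) by apply (tr _ _ _ _ e2); field.
have f2' : w*(m*u/2) = m*(-(u*w/2)) by apply (tr _ _ _ _ f2); field.
have e3' : v*((s^+2+v^+2)/2 - c) = v*(-(m^+2+s^+2+u^+2+v^+2)/2 - c) + s*(-(s*v)/2)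
   + v*((m^+2-v^+2-w^+2)/2 - c) by apply (tr _ _ _ _ e3); field.
have f4' : w*((u^+2+w^+2)/2 - c) = w*(-(m^+2+s^+2+u^+2+w^+2)/2 - c) - u*(u*w/2)
   + w*((m^+2-v^+2-w^+2)/2 - c) by apply (tr _ _ _ _ f4); field.
clear e2 e3 f2 f4.
have hw : 0 < w by apply: lt_trans hvw.
have h1 : m * v * s = 0.
  have -> : m * v * s = v*(m*s/2) - m*(-(s*v)/2) by field.
  by rewrite e2' subrr.
have h2 : m * w * u = 0.
  have -> : m * w * u = w*(m*u/2) - m*(-(u*w/2)) by field.
  by rewrite f2' subrr.
have k1 : v*(c + (3*v^+2+w^+2)/2 + s^+2 + u^+2/2) + s^+2*v/2 = 0.
  have -> : v*(c + (3*v^+2+w^+2)/2 + s^+2 + u^+2/2) + s^+2*v/2 =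
    v*((s^+2+v^+2)/2 - c) - (v*(-(m^+2+s^+2+u^+2+v^+2)/2 - c) + s*(-(s*v)/2)
   + v*((m^+2-v^+2-w^+2)/2 - c)) by field.
  by rewrite e3' subrr.
have k2 : w*(c + (3*w^+2+v^+2)/2 + s^+2/2 + u^+2) + u^+2*w/2 = 0.
  have -> : w*(c + (3*w^+2+v^+2)/2 + s^+2/2 + u^+2) + u^+2*w/2 =
    w*((u^+2+w^+2)/2 - c) - (w*(-(m^+2+s^+2+u^+2+w^+2)/2 - c) - u*(u*w/2)
   + w*((m^+2-v^+2-w^+2)/2 - c)) by field.
  by rewrite f4' subrr.
move/eqP: h1; rewrite mulf_eq0 mulf_eq0 (gt_eqF hm) (gt_eqF hv) /= => /eqP hs0.
move/eqP: h2; rewrite mulf_eq0 mulf_eq0 (gt_eqF hm) (gt_eqF hw) /= => /eqP hu0.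
subst s u.
have k1' : v*(c + (3*v^+2+w^+2)/2) = 0 by apply (tr _ _ _ _ k1); field.
have k2' : w*(c + (3*w^+2+v^+2)/2) = 0 by apply (tr _ _ _ _ k2); field.
move/eqP: k1'; rewrite mulf_eq0 (gt_eqF hv) /= => /eqP k1''.
move/eqP: k2'; rewrite mulf_eq0 (gt_eqF hw) /= => /eqP k2''.
have : (w - v) * (w + v) = 0.
  have -> : (w - v) * (w + v) = (c + (3*w^+2+v^+2)/2) - (c + (3*v^+2+w^+2)/2) by field.
  by rewrite k1'' k2'' subrr.
move/eqP; rewrite mulf_eq0 subr_eq0 (gt_eqF hvw) /=.
by rewrite gt_eqF // addr_gt0.
Qed.
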